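(* Let $L$ be a linear order in which every cut $(I,J)$ with $I$ and $J$ both nonempty has a type. If $(C_k)_{k\in\omega}$ and $(D_l)_{l\in\omega}$ are two ladders in $L$, then there exist $k_0,l_0\in\omega$ such that $C_{k_0+n}=D_{l_0+n}$ for all $n\in\omega$. Consequently, if $(C_k)$ has spectrum $(n_k)_{k\in\omega}$ and $(D_l)$ has spectrum $(m_l)_{l\in\omega}$, then these spectra are tail-equivalent: there exist $k_0,l_0$ with $n_{k_0+n}=m_{l_0+n}$ for all $n\in\omega$.
   Context: A cut in a linear order $L$ is a pair $(I,J)$ where $I$ is an initial segment of $L$ and $J=L\setminus I$. For cuts $C_1=(I_1,J_1)$ and $C_2=(I_2,J_2)$, write $C_1<C_2$ if $I_1$ is a strict initial segment of $I_2$. For $n\in\omega$, a cut $C=(I,J)$ has type $n$, written $tp(C)=n$, if $I$ has a final segment isomorphic to the ordinal $\omega^n$ (so type $0$ means $I$ has a greatest element); a cut has at most one type. A sequence of cuts $\cdots<C_2<C_1<C_0$ in $L$, each with both sides nonempty, is a ladder if: (1) it is coinitial in $L$, i.e. for every $x\in L$ there is $k$ with $x$ not in the left side of $C_k$ (every point of $L$ is eventually to the right of the cuts); (2) $tp(C_{k+1})\ge tp(C_k)$ for all $k$; (3) for all $k$, every cut $D$ with $C_{k+1}<D<C_k$ satisfies $tp(D)<tp(C_k)$. A ladder $(C_k)$ has spectrum $(n_k)_{k\in\omega}$ if $tp(C_k)=n_k$ for all $k$. *)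

(* Defs.v *)
From Stdlib Require Import List Arith.
Import ListNotations.

Definition strict_linear_order {T : Type} (lt : T -> T -> Prop) : Prop :=
  (forall x, ~ lt x x) /\
  (forall x y z, lt x y -> lt y z -> lt x z) /\
  (forall x y, lt x y \/ x = y \/ lt y x).

(* A cut (I, L \ I) is represented by its left side I, an initial segment. *)
Definition initial_segment {T : Type} (lt : T -> T -> Prop) (I : T -> Prop) : Prop :=
  forall x y, lt x y -> I y -> I x.

Definition proper_cut {T : Type} (lt : T -> T -> Prop) (I : T -> Prop) : Prop :=
  initial_segment lt I /\ (exists x, I x) /\ (exists y, ~ I y).

Definition cut_lt {T : Type} (I1 I2 : T -> Prop) : Prop :=
  (forall x, I1 x -> I2 x) /\ (exists x, I2 x /\ ~ I1 x).

Definition cut_eq {T : Type} (I1 I2 : T -> Prop) : Prop :=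
  forall x, I1 x <-> I2 x.

(* The ordinal omega^n, realised as length-n lists of naturals ordered
   lexicographically (first coordinate most significant). *)
Fixpoint lexlt (l m : list nat) : Prop :=
  match l, m with
  | a :: l', b :: m' => a < b \/ (a = b /\ lexlt l' m')
  | _, _ => False
  end.

Definition iso_omega_pow {T : Type} (lt : T -> T -> Prop) (F : T -> Prop) (n : nat) : Prop :=
  exists f : T -> list nat,
    (forall x, F x -> length (f x) = n) /\
    (forall x y, F x -> F y -> (lt x y <-> lexlt (f x) (f y))) /\
    (forall l, length l = n -> exists x, F x /\ f x = l).

Definition final_segment_of {T : Type} (lt : T -> T -> Prop) (F I : T -> Prop) : Prop :=
  (forall x, F x -> I x) /\ (forall x y, F x -> I y -> lt x y -> F y).

Definition has_type {T : Type} (lt : T -> T -> Prop) (I : T -> Prop) (n : nat) : Prop :=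
  exists F, final_segment_of lt F I /\ iso_omega_pow lt F n.

Definition ladder {T : Type} (lt : T -> T -> Prop) (C : nat -> T -> Prop) : Prop :=
  (forall k, proper_cut lt (C k)) /\
  (forall k, cut_lt (C (S k)) (C k)) /\
  (forall x, exists k, ~ C k x) /\
  (forall k a b, has_type lt (C (S k)) a -> has_type lt (C k) b -> b <= a) /\
  (forall k (D : T -> Prop) a b, initial_segment lt D ->
     cut_lt (C (S k)) D -> cut_lt D (C k) ->
     has_type lt D a -> has_type lt (C k) b -> a < b).

(* Main.v *)
Require Import Defs.
From Stdlib Require Import List Arith Lia Classical ClassicalEpsilon.
Import ListNotations.

Lemma lexlt_irrefl l : ~ lexlt l l.
Proof. induction l as [|a l IH]; simpl; [tauto|]. intros [H|[_ H]]; [lia|auto]. Qed.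

Lemma lexlt_asym l m : lexlt l m -> lexlt m l -> False.
Proof.
  revert m; induction l as [|a l IH]; intros [|b m]; simpl; try tauto.
  intros [H|[H0 H]] [H'|[H1 H']]; try lia. eauto.
Qed.

Lemma lexlt_app l l' r : lexlt l l' -> lexlt (l ++ r) (l' ++ r).
Proof.
  revert l'; induction l as [|a l IH]; intros [|b l']; simpl; try tauto.
  intros [H|[H0 H]]; [left; auto | right; split; auto].
Qed.

Definition Emb (p q : nat) : Prop := exists g : list nat -> list nat,
  (forall l, length l = p -> length (g l) = q) /\
  (forall l l', length l = p -> length l' = p -> lexlt l l' -> lexlt (g l) (g l')).

Lemma emb_trans p q r : Emb p q -> Emb q r -> Emb p r.
Proof.
  intros [g [Hg1 Hg2]] [h [Hh1 Hh2]]. exists (fun l => h (g l)). split; auto.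
Qed.

Lemma emb_pad m p : m <= p -> Emb m p.
Proof.
  intros H. exists (fun l => l ++ repeat 0 (p - m)). split.
  - intros l Hl. rewrite length_app, repeat_length. lia.
  - intros l l' _ _ Hll. apply lexlt_app; auto.
Qed.

Definition Rlen (m : nat) (a b : list nat) : Prop := length a = m /\ lexlt a b.

Lemma acc_len m : forall l, length l = m -> Acc (Rlen m) l.
Proof.
  induction m as [|m IHm]; intros l Hl.
  - destruct l; [|discriminate]. constructor. intros y [_ H]. destruct y; simpl in H; contradiction.
  - destruct l as [|h t]; [discriminate|]. simpl in Hl. injection Hl as Ht.
    assert (Ht' := IHm t Ht). clear Ht.
    revert t Ht'. induction h as [h IHh] using (well_founded_induction lt_wf). intros t Ht.
    induction Ht as [t _ IHt].
    constructor. intros [|h' t'] [Hlen Hlt]; simpl in Hlt; [contradiction|].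
    simpl in Hlen. injection Hlen as Hlen.
    destruct Hlt as [Hlt|[E Hlt]].
    + apply IHh; auto.
    + subst h'. apply IHt. split; auto.
Qed.

Lemma no_descent m (f : list nat -> list nat) :
  (forall l, length l = m -> length (f l) = m) ->
  (forall l l', length l = m -> length l' = m -> lexlt l l' -> lexlt (f l) (f l')) ->
  forall x, length x = m -> ~ lexlt (f x) x.
Proof.
  intros Hlen Hmono x Hx. pose proof (acc_len m x Hx) as Ha. revert Hx.
  induction Ha as [x _ IH]. intros Hx Hfx.
  apply (IH (f x)); [split; auto | auto | ].
  apply Hmono; auto.
Qed.

Lemma no_emb n : ~ Emb (S n) n.
Proof.
  intros [g [Hg1 Hg2]].
  apply (no_descent (S n) (fun l => 0 :: g l)) with (1 :: repeat 0 n).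
  - intros l Hl; simpl; auto.
  - intros l l' Hl Hl' H; simpl; right; split; auto.
  - simpl; rewrite repeat_length; auto.
  - simpl. left. lia.
Qed.

Lemma emb_antisym a b : Emb a b -> Emb b a -> a = b.
Proof.
  intros H1 H2. destruct (lt_eq_lt_dec a b) as [[H|H]|H]; auto; exfalso.
  - apply (no_emb a). apply emb_trans with b; auto. apply emb_pad; lia.
  - apply (no_emb b). apply emb_trans with a; auto. apply emb_pad; lia.
Qed.

Lemma emb_from_segments T (lt : T -> T -> Prop) (Hlin : strict_linear_order lt)
  (I F F' : T -> Prop) a b f f' z :
  final_segment_of lt F I -> final_segment_of lt F' I ->
  (forall x, F x -> length (f x) = a) ->
  (forall x y, F x -> F y -> (lt x y <-> lexlt (f x) (f y))) ->
  (forall x, F' x -> length (f' x) = b) ->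
  (forall x y, F' x -> F' y -> (lt x y <-> lexlt (f' x) (f' y))) ->
  (forall l, length l = b -> exists x, F' x /\ f' x = l) ->
  F z -> F' z -> 1 <= b -> Emb b a.
Proof.
  intros [HFI HFfin] [HF'I HF'fin] Hfl Hfo Hf'l Hf'o Hf'surj Hz Hz' Hb.
  destruct Hlin as [Hirr [Htr Htri]].
  destruct (f' z) as [|s1 st] eqn:Hs.
  { specialize (Hf'l z Hz'). rewrite Hs in Hf'l. simpl in Hf'l. lia. }
  set (shift := fun l : list nat => (S s1 + hd 0 l) :: tl l).
  assert (Hex : forall l, exists y, length l = b -> F' y /\ f' y = shift l).
  { intros l. destruct (Nat.eq_dec (length l) b) as [E|E].
    - destruct (Hf'surj (shift l)) as [y Hy].
      + destruct l as [|h t]; simpl in E; [lia|]. unfold shift; simpl. lia.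
      + exists y; auto.
    - exists z; intros; contradiction. }
  set (pick := fun l => proj1_sig (constructive_indefinite_description _ (Hex l))).
  assert (Hpick : forall l, length l = b -> F' (pick l) /\ f' (pick l) = shift l).
  { intros l Hl. unfold pick. destruct (constructive_indefinite_description _ (Hex l)) as [y Hy]. simpl. auto. }
  assert (HpickF : forall l, length l = b -> F (pick l)).
  { intros l Hl. destruct (Hpick l Hl) as [H1 H2].
    destruct (Htri z (pick l)) as [H|[H|H]].
    - eapply HFfin; eauto.
    - rewrite <- H; auto.
    - exfalso. apply (proj1 (Hf'o _ _ H1 Hz')) in H. rewrite H2, Hs in H.
      unfold shift in H; simpl in H. destruct H as [H|[H _]]; lia. }
  exists (fun l => f (pick l)). split.
  - intros l Hl. apply Hfl, HpickF, Hl.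
  - intros l l' Hl Hl' Hll. apply (proj1 (Hfo _ _ (HpickF l Hl) (HpickF l' Hl'))).
    destruct (Hpick l Hl) as [H1 H2]. destruct (Hpick l' Hl') as [H1' H2'].
    apply (proj2 (Hf'o _ _ H1 H1')). rewrite H2, H2'. unfold shift.
    destruct l as [|h t]; destruct l' as [|h' t']; simpl in *; try contradiction.
    destruct Hll as [H|[E H]]; [left; lia | right; split; auto].
Qed.

Lemma type_unique T (lt : T -> T -> Prop) (Hlin : strict_linear_order lt) I a b :
  has_type lt I a -> has_type lt I b -> a = b.
Proof.
  intros [F [HF [f [Hfl [Hfo Hfs]]]]] [F' [HF' [f' [Hf'l [Hf'o Hf's]]]]].
  destruct (Hfs (repeat 0 a) (repeat_length 0 a)) as [x0 [Hx0 _]].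
  destruct (Hf's (repeat 0 b) (repeat_length 0 b)) as [x1 [Hx1 _]].
  assert (Hz : exists z, F z /\ F' z).
  { pose proof Hlin as [_ [_ Htri]]. destruct HF as [HFI HFf]. destruct HF' as [HF'I HF'f].
    destruct (Htri x0 x1) as [H|[H|H]].
    - exists x1. split; auto. eapply HFf; eauto.
    - subst. eauto.
    - exists x0. split; auto. eapply HF'f; eauto. }
  destruct Hz as [z [Hz Hz']].
  apply emb_antisym.
  - destruct (Nat.eq_dec a 0) as [->|Ha]; [apply emb_pad; lia|].
    apply (emb_from_segments T lt Hlin I F' F b a f' f z); auto; lia.
  - destruct (Nat.eq_dec b 0) as [->|Hb]; [apply emb_pad; lia|].
    apply (emb_from_segments T lt Hlin I F F' a b f f' z); auto; lia.
Qed.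

Lemma has_type_eq T (lt : T -> T -> Prop) I J n : cut_eq I J -> has_type lt I n -> has_type lt J n.
Proof.
  intros HE [F [[H1 H2] Hiso]]. exists F. split; [split|auto].
  - intros x Hx. apply (proj1 (HE x)); auto.
  - intros x y Hx Hy Hxy. apply (H2 x y); auto. apply (proj2 (HE y)); auto.
Qed.

Lemma cut_trich T (lt : T -> T -> Prop) (Hlin : strict_linear_order lt) I1 I2 :
  initial_segment lt I1 -> initial_segment lt I2 ->
  cut_eq I1 I2 \/ cut_lt I1 I2 \/ cut_lt I2 I1.
Proof.
  intros H1 H2. destruct Hlin as [Hirr [_ Htri]].
  destruct (classic (forall x, I1 x -> I2 x)) as [Hs|Hs].
  - destruct (classic (exists x, I2 x /\ ~ I1 x)) as [He|He].
    + right; left; split; auto.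
    + left. intros x; split; auto. intros Hx. apply NNPP; intros Hn. apply He; eauto.
  - apply not_all_ex_not in Hs. destruct Hs as [x Hx].
    apply imply_to_and in Hx. destruct Hx as [Hx1 Hx2].
    right; right. split; [|eauto].
    intros y Hy. destruct (Htri x y) as [H|[H|H]].
    + exfalso; apply Hx2; eapply H2; eauto.
    + subst; contradiction.
    + eapply H1; eauto.
Qed.

Lemma cut_lt_asym T (A B : T -> Prop) : cut_lt A B -> cut_lt B A -> False.
Proof. intros [H1 [x [Hx1 Hx2]]] [H2 _]. auto. Qed.

Lemma cut_lt_eq_false T (A B : T -> Prop) : cut_lt A B -> cut_eq A B -> False.
Proof. intros [H1 [x [Hx1 Hx2]]] HE. apply Hx2, HE; auto. Qed.

Lemma cut_lt_trans T (A B C : T -> Prop) : cut_lt A B -> cut_lt B C -> cut_lt A C.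
Proof.
  intros [H1 [x [Hx1 Hx2]]] [H2 [y [Hy1 Hy2]]]. split; auto.
  exists y; split; auto.
Qed.

Lemma cut_lt_eq_r T (A B C : T -> Prop) : cut_lt A B -> cut_eq B C -> cut_lt A C.
Proof.
  intros [H1 [x [Hx1 Hx2]]] HE. split.
  - intros y Hy. apply HE; auto.
  - exists x; split; auto. apply HE; auto.
Qed.

Lemma cut_eq_sym T (A B : T -> Prop) : cut_eq A B -> cut_eq B A.
Proof. intros H x. symmetry; auto. Qed.

Lemma ladder_below T (lt : T -> T -> Prop) (Hlin : strict_linear_order lt) C (HC : ladder lt C)
  (I : T -> Prop) x : initial_segment lt I -> I x -> exists k, cut_lt (C k) I.
Proof.
  intros HI Hx. destruct HC as [Hp [_ [Hco _]]]. destruct (Hco x) as [k Hk].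
  exists k. split; [|eauto].
  intros y Hy. destruct Hlin as [_ [_ Htri]]. destruct (Hp k) as [Hi _].
  destruct (Htri x y) as [H|[H|H]].
  - exfalso; apply Hk; eapply Hi; eauto.
  - subst; contradiction.
  - eapply HI; eauto.
Qed.


Lemma key_step T (lt : T -> T -> Prop) (Hlin : strict_linear_order lt)
  (Htypes : forall I, proper_cut lt I -> exists n, has_type lt I n)
  C D (HC : ladder lt C) (HD : ladder lt D) i l :
  cut_lt (D (S l)) (C i) -> cut_lt (C i) (D l) ->
  cut_eq (C (S i)) (D (S l)) \/ cut_lt (D (S l)) (C (S i)).
Proof.
  intros H1 H2.
  pose proof HC as [HpC [HltC [_ [HmC HgC]]]].
  pose proof HD as [HpD [HltD [_ [HmD HgD]]]].
  destruct (cut_trich T lt Hlin (C (S i)) (D (S l)) (proj1 (HpC _)) (proj1 (HpD _)))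
    as [H|[H|H]]; auto. exfalso.
  destruct (Htypes _ (HpC i)) as [c Hc].
  destruct (Htypes _ (HpD l)) as [d Hd].
  destruct (Htypes _ (HpD (S l))) as [e He].
  pose proof (HgC i (D (S l)) e c (proj1 (HpD _)) H H1 He Hc).
  pose proof (HgD l (C i) c d (proj1 (HpC _)) H1 H2 Hc Hd).
  pose proof (HmD l e d He Hd). lia.
Qed.

Lemma chain T (lt : T -> T -> Prop) (Hlin : strict_linear_order lt)
  (Htypes : forall I, proper_cut lt I -> exists n, has_type lt I n)
  C D (HC : ladder lt C) (HD : ladder lt D) l :
  forall n i, cut_lt (D (S l)) (C i) -> cut_lt (C i) (D l) ->
  cut_lt (C (i + n)) (D (S l)) -> exists m, cut_eq (C m) (D (S l)).
Proof.
  induction n as [|n IH]; intros i H1 H2 H3.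
  - rewrite Nat.add_0_r in H3. exfalso; eapply cut_lt_asym; eauto.
  - destruct (key_step T lt Hlin Htypes C D HC HD i l H1 H2) as [E|E]; [eauto|].
    apply (IH (S i)); auto.
    + eapply cut_lt_trans; [apply (proj1 (proj2 HC))|]; auto.
    + replace (S i + n) with (i + S n) by lia; auto.
Qed.

Lemma merge_lt T (lt : T -> T -> Prop) (Hlin : strict_linear_order lt)
  (Htypes : forall I, proper_cut lt I -> exists n, has_type lt I n)
  C D (HC : ladder lt C) (HD : ladder lt D) :
  cut_lt (C 0) (D 0) -> exists k l, cut_eq (C k) (D l).
Proof.
  intros H0.
  pose proof HC as [HpC [HltC _]].
  pose proof HD as [HpD [HltD _]].
  destruct (HpC 0) as [HI0 [[x Hx] _]].
  destruct (ladder_below T lt Hlin D HD (C 0) x HI0 Hx) as [m Hm].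
  assert (Hl : forall m, cut_lt (D m) (C 0) -> exists l, cut_eq (C 0) (D l) \/
           (cut_lt (D (S l)) (C 0) /\ cut_lt (C 0) (D l))).
  { induction m0 as [|m' IH]; intros Hm0.
    - exfalso; eapply cut_lt_asym; eauto.
    - destruct (cut_trich T lt Hlin (D m') (C 0) (proj1 (HpD _)) HI0) as [E|[E|E]].
      + exists m'. left. apply cut_eq_sym; auto.
      + auto.
      + exists m'. right. auto. }
  destruct (Hl m Hm) as [l [E|[E1 E2]]]; [eauto|].
  destruct (HpD (S l)) as [HIl [[y Hy] _]].
  destruct (ladder_below T lt Hlin C HC (D (S l)) y HIl Hy) as [i Hi].
  destruct (chain T lt Hlin Htypes C D HC HD l i 0 E1 E2 Hi) as [k Hk]. eauto.
Qed.

Lemma prop_half T (lt : T -> T -> Prop) (Hlin : strict_linear_order lt)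
  (Htypes : forall I, proper_cut lt I -> exists n, has_type lt I n)
  C D (HC : ladder lt C) (HD : ladder lt D) j m :
  cut_eq (C j) (D m) -> ~ cut_lt (C (S j)) (D (S m)).
Proof.
  intros E H.
  pose proof HC as [HpC [HltC [_ [HmC HgC]]]].
  pose proof HD as [HpD [HltD [_ [HmD HgD]]]].
  destruct (Htypes _ (HpC j)) as [b Hb].
  destruct (Htypes _ (HpD (S m))) as [e He].
  assert (H2 : cut_lt (D (S m)) (C j)) by (eapply cut_lt_eq_r; [apply HltD|apply cut_eq_sym; auto]).
  pose proof (HgC j (D (S m)) e b (proj1 (HpD _)) H H2 He Hb).
  pose proof (HmD m e b He (has_type_eq T lt _ _ b E Hb)). lia.
Qed.

Lemma propagate T (lt : T -> T -> Prop) (Hlin : strict_linear_order lt)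
  (Htypes : forall I, proper_cut lt I -> exists n, has_type lt I n)
  C D (HC : ladder lt C) (HD : ladder lt D) j m :
  cut_eq (C j) (D m) -> cut_eq (C (S j)) (D (S m)).
Proof.
  intros E.
  destruct (cut_trich T lt Hlin (C (S j)) (D (S m)) (proj1 (proj1 HC _)) (proj1 (proj1 HD _)))
    as [H|[H|H]]; auto; exfalso.
  - eapply (prop_half T lt Hlin Htypes C D HC HD); eauto.
  - eapply (prop_half T lt Hlin Htypes D C HD HC); eauto. apply cut_eq_sym; auto.
Qed.

Theorem mainTheorem4 (T : Type) (lt : T -> T -> Prop)
  (Hlin : strict_linear_order lt)
  (Htypes : forall I, proper_cut lt I -> exists n, has_type lt I n)
  (C D : nat -> T -> Prop)
  (HC : ladder lt C) (HD : ladder lt D) :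
  (exists k0 l0, forall n, cut_eq (C (k0 + n)) (D (l0 + n))) /\
  (forall ns ms : nat -> nat,
     (forall k, has_type lt (C k) (ns k)) ->
     (forall l, has_type lt (D l) (ms l)) ->
     exists k0 l0, forall n, ns (k0 + n) = ms (l0 + n)).
Proof.
  assert (P1 : exists k0 l0, forall n, cut_eq (C (k0 + n)) (D (l0 + n))).
  { assert (Hkl : exists k l, cut_eq (C k) (D l)).
    { destruct (cut_trich T lt Hlin (C 0) (D 0) (proj1 (proj1 HC _)) (proj1 (proj1 HD _)))
        as [H|[H|H]]; eauto.
      - eapply merge_lt; eauto.
      - destruct (merge_lt T lt Hlin Htypes D C HD HC H) as [k [l E]].
        exists l, k. apply cut_eq_sym; auto. }
    destruct Hkl as [k [l E]]. exists k, l. induction n as [|n IH].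
    - rewrite !Nat.add_0_r; auto.
    - rewrite !Nat.add_succ_r. apply (propagate T lt Hlin Htypes C D HC HD); auto. }
  split; auto.
  intros ns ms Hns Hms. destruct P1 as [k0 [l0 P]]. exists k0, l0. intros n.
  apply (type_unique T lt Hlin (D (l0 + n))); auto.
  apply (has_type_eq T lt (C (k0 + n))); auto.
Qed.
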